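(* Let $\mathcal Y\subseteq\mathcal C$ be a contravariantly finite subcategory which is closed under extensions and direct summands, and let $\mathcal X=\mathcal Y^{\perp_1}$. Then $\mathcal X$ is a covariantly finite subcategory of $\mathcal C$ which is closed under extensions and direct summands.
   Context: $(\mathcal C,\mathbb E,\mathfrak s)$ is an extriangulated category in the sense of Nakaoka–Palu, whose underlying additive category is Krull–Schmidt, and which has enough projectives and enough injectives (projective $P$: $\mathbb E(P,-)=0$; injective $I$: $\mathbb E(-,I)=0$; every object is the third term of an $\mathbb E$-triangle with projective middle term and the first term of one with injective middle term). All subcategories are full additive subcategories closed under isomorphisms. A subcategory is closed under extensions if for every $\mathbb E$-triangle $A\to B\to C\dashrightarrow$ with $A,C$ in it, $B$ is in it. For a subcategory $\mathcal X$, ${}^{\perp_1}\mathcal X=\{Y\in\mathcal C:\mathbb E(Y,X)=0\ \forall X\in\mathcal X\}$ and $\mathcal X^{\perp_1}=\{Y\in\mathcal C:\mathbb E(X,Y)=0\ \forall X\in\mathcal X\}$. Covariantly/contravariantly finite means every object has a left/right approximation by the subcategory. *)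

(* Defs.v *)
From HB Require Import structures.
From mathcomp Require Import all_boot all_algebra.

Set Implicit Arguments.
Unset Strict Implicit.
Unset Printing Implicit Defensive.

Import GRing.Theory.
Local Open Scope ring_scope.

Record PreAddCat := {
  obj :> Type;
  hom : obj -> obj -> zmodType;
  comp : forall {a b c : obj}, hom b c -> hom a b -> hom a c;
  idm : forall a : obj, hom a a;
  compA : forall a b c d (h : hom c d) (g : hom b c) (f : hom a b),
      comp h (comp g f) = comp (comp h g) f;
  comp1m : forall a b (f : hom a b), comp (idm b) f = f;
  compm1 : forall a b (f : hom a b), comp f (idm a) = f;
  compDl : forall a b c (g g' : hom b c) (f : hom a b),
      comp (g + g') f = comp g f + comp g' f;
  compDr : forall a b c (g : hom b c) (f f' : hom a b),
      comp g (f + f') = comp g f + comp g f'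
}.

Arguments comp {C a b c} : rename.
Arguments idm {C} : rename.

Section PreAddDefs.
Variable C : PreAddCat.

Definition isIso (a b : C) (f : hom a b) : Prop :=
  exists g : hom b a, comp g f = idm a /\ comp f g = idm b.

Definition is_zero_obj (z : C) : Prop := idm z = 0.

Definition biprod2 (A1 A2 S : C) (p1 : hom S A1) (p2 : hom S A2)
    (e1 : hom A1 S) (e2 : hom A2 S) : Prop :=
  [/\ comp p1 e1 = idm A1, comp p2 e2 = idm A2,
      comp p1 e2 = 0, comp p2 e1 = 0 &
      comp e1 p1 + comp e2 p2 = idm S].

Definition biprodn (n : nat) (Xs : 'I_n -> C) (X : C)
    (p : forall i, hom X (Xs i)) (e : forall i, hom (Xs i) X) : Prop :=
  [/\ (forall i, comp (p i) (e i) = idm (Xs i)),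
      (forall i j, i != j -> comp (p i) (e j) = 0) &
      \sum_(i < n) comp (e i) (p i) = idm X].

Definition local_endo (X : C) : Prop :=
  idm X <> 0 /\ forall f : hom X X, isIso f \/ isIso (idm X - f).

Definition krull_schmidt : Prop :=
  forall X : C, exists (n : nat) (Xs : 'I_n -> C)
    (p : forall i, hom X (Xs i)) (e : forall i, hom (Xs i) X),
    biprodn p e /\ forall i, local_endo (Xs i).

Definition seq_equiv (A B B' D : C) (x : hom A B) (y : hom B D)
    (x' : hom A B') (y' : hom B' D) : Prop :=
  exists b : hom B B', [/\ isIso b, comp b x = x' & comp y' b = y].

End PreAddDefs.

(* Ext D A stands for E(D, A) (contravariant in D, covariant in A).     *)
(* realizes d x y  means  s(d) = [A -x-> B -y-> D].                     *)
Record ExtriCat := {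
  ecat :> PreAddCat;
  ex_zero_obj : exists Z : ecat, is_zero_obj Z;
  ex_biprod : forall A1 A2 : ecat, exists (S : ecat) (p1 : hom S A1)
     (p2 : hom S A2) (e1 : hom A1 S) (e2 : hom A2 S), biprod2 p1 p2 e1 e2;
  Ext : ecat -> ecat -> zmodType;
  push : forall {A A' D : ecat}, hom A A' -> Ext D A -> Ext D A';
  pull : forall {A D D' : ecat}, hom D' D -> Ext D A -> Ext D' A;
  pushD : forall A A' D (a : hom A A') (d d' : Ext D A),
      push a (d + d') = push a d + push a d';
  pushDm : forall A A' D (a a' : hom A A') (d : Ext D A),
      push (a + a') d = push a d + push a' d;
  pullD : forall A D D' (c : hom D' D) (d d' : Ext D A),
      pull c (d + d') = pull c d + pull c d';
  pullDm : forall A D D' (c c' : hom D' D) (d : Ext D A),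
      pull (c + c') d = pull c d + pull c' d;
  push1 : forall A D (d : Ext D A), push (idm A) d = d;
  pull1 : forall A D (d : Ext D A), pull (idm D) d = d;
  push_comp : forall A A' A'' D (a : hom A A') (b : hom A' A'') (d : Ext D A),
      push (comp b a) d = push b (push a d);
  pull_comp : forall A D D' D'' (c : hom D' D) (c' : hom D'' D') (d : Ext D A),
      pull (comp c c') d = pull c' (pull c d);
  push_pull : forall A A' D D' (a : hom A A') (c : hom D' D) (d : Ext D A),
      push a (pull c d) = pull c (push a d);
  realizes : forall {A D : ecat}, Ext D A -> forall {B : ecat},
      hom A B -> hom B D -> Prop;
  real_ex : forall A D (d : Ext D A),
      exists (B : ecat) (x : hom A B) (y : hom B D), realizes d x y;
  real_uniq : forall A B B' D (d : Ext D A) (x : hom A B) (y : hom B D)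
      (x' : hom A B') (y' : hom B' D),
      realizes d x y -> realizes d x' y' -> seq_equiv x y x' y';
  real_closed : forall A B B' D (d : Ext D A) (x : hom A B) (y : hom B D)
      (x' : hom A B') (y' : hom B' D),
      realizes d x y -> seq_equiv x y x' y' -> realizes d x' y';
  real_morph : forall A B D A' B' D' (d : Ext D A) (d' : Ext D' A')
      (x : hom A B) (y : hom B D) (x' : hom A' B') (y' : hom B' D')
      (a : hom A A') (c : hom D D'),
      realizes d x y -> realizes d' x' y' -> push a d = pull c d' ->
      exists b : hom B B', comp b x = comp x' a /\ comp y' b = comp c y;
  real_zero : forall A D S (p1 : hom S A) (p2 : hom S D) (e1 : hom A S)
      (e2 : hom D S), biprod2 p1 p2 e1 e2 -> realizes (0 : Ext D A) e1 p2;
  real_sum : forall A A' B B' D D' SA SB SD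
      (pA : hom SA A) (pA' : hom SA A') (eA : hom A SA) (eA' : hom A' SA)
      (pB : hom SB B) (pB' : hom SB B') (eB : hom B SB) (eB' : hom B' SB)
      (pD : hom SD D) (pD' : hom SD D') (eD : hom D SD) (eD' : hom D' SD)
      (d : Ext D A) (d' : Ext D' A')
      (x : hom A B) (y : hom B D) (x' : hom A' B') (y' : hom B' D'),
      biprod2 pA pA' eA eA' -> biprod2 pB pB' eB eB' ->
      biprod2 pD pD' eD eD' ->
      realizes d x y -> realizes d' x' y' ->
      realizes (push eA (pull pD d) + push eA' (pull pD' d'))
        (comp eB (comp x pA) + comp eB' (comp x' pA'))
        (comp eD (comp y pB) + comp eD' (comp y' pB'));
  ET3 : forall A B D A' B' D' (d : Ext D A) (d' : Ext D' A')
      (x : hom A B) (y : hom B D) (x' : hom A' B') (y' : hom B' D')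
      (a : hom A A') (b : hom B B'),
      realizes d x y -> realizes d' x' y' -> comp b x = comp x' a ->
      exists c : hom D D', comp c y = comp y' b /\ push a d = pull c d';
  ET3op : forall A B D A' B' D' (d : Ext D A) (d' : Ext D' A')
      (x : hom A B) (y : hom B D) (x' : hom A' B') (y' : hom B' D')
      (b : hom B B') (c : hom D D'),
      realizes d x y -> realizes d' x' y' -> comp c y = comp y' b ->
      exists a : hom A A', comp b x = comp x' a /\ push a d = pull c d';
  ET4 : forall (A B C' D F : ecat) (d : Ext D A) (f : hom A B) (f' : hom B D)
      (d' : Ext F B) (g : hom B C') (g' : hom C' F),
      realizes d f f' -> realizes d' g g' ->
      exists (E : ecat) (h : hom A C') (h' : hom C' E) (d'' : Ext E A)
        (dd : hom D E) (e : hom E F),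
        [/\ realizes d'' h h', realizes (push f' d') dd e,
            pull dd d'' = d, push f d'' = pull e d' &
            [/\ h = comp g f, comp h' g = comp dd f' & comp e h' = g']];
  ET4op : forall (A B C' D F : ecat) (d : Ext B D) (f' : hom D A) (f : hom A B)
      (d' : Ext C' F) (g' : hom F B) (g : hom B C'),
      realizes d f' f -> realizes d' g' g ->
      exists (E : ecat) (dd : hom D E) (e : hom E F) (h' : hom E A)
        (h : hom A C') (d'' : Ext C' E),
        [/\ realizes d'' h' h, realizes (pull g' d) dd e,
            d' = push e d'', push dd d = pull g d'' &
            [/\ f' = comp h' dd, comp f h' = comp g' e & h = comp g f]]
}.

Arguments push {C A A' D} : rename.
Arguments pull {C A D D'} : rename.
Arguments realizes {C A D} d {B} : rename.

Section ExtriDefs.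
Variable C : ExtriCat.

Definition projective (P : C) : Prop := forall (X : C) (d : Ext P X), d = 0.
Definition injective (I : C) : Prop := forall (X : C) (d : Ext X I), d = 0.

Definition enough_projectives : Prop :=
  forall X : C, exists (A P : C) (d : Ext X A) (x : hom A P) (y : hom P X),
    realizes d x y /\ projective P.
Definition enough_injectives : Prop :=
  forall X : C, exists (I D : C) (d : Ext D X) (x : hom X I) (y : hom I D),
    realizes d x y /\ injective I.

Definition iso_closed (P : C -> Prop) : Prop :=
  forall (A B : C) (f : hom A B), isIso f -> P A -> P B.

Definition additive_sub (P : C -> Prop) : Prop :=
  (forall Z : C, is_zero_obj Z -> P Z) /\
  (forall (A1 A2 S : C) (p1 : hom S A1) (p2 : hom S A2) (e1 : hom A1 S)
      (e2 : hom A2 S), biprod2 p1 p2 e1 e2 -> P A1 -> P A2 -> P S).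

Definition ext_closed (P : C -> Prop) : Prop :=
  forall (A B D : C) (d : Ext D A) (x : hom A B) (y : hom B D),
    realizes d x y -> P A -> P D -> P B.

Definition summand_closed (P : C -> Prop) : Prop :=
  forall (A1 A2 S : C) (p1 : hom S A1) (p2 : hom S A2) (e1 : hom A1 S)
      (e2 : hom A2 S), biprod2 p1 p2 e1 e2 -> P S -> P A1 /\ P A2.

Definition contravariantly_finite (P : C -> Prop) : Prop :=
  forall X : C, exists (Y : C) (f : hom Y X), P Y /\
    forall (Y' : C) (g : hom Y' X), P Y' -> exists h : hom Y' Y, g = comp f h.

Definition covariantly_finite (P : C -> Prop) : Prop :=
  forall X : C, exists (Y : C) (f : hom X Y), P Y /\
    forall (Y' : C) (g : hom X Y'), P Y' -> exists h : hom Y Y', g = comp h f.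

Definition perp1_right (P : C -> Prop) : C -> Prop :=
  fun Z => forall (Y : C), P Y -> forall d : Ext Y Z, d = 0.

Definition perp1_left (P : C -> Prop) : C -> Prop :=
  fun Z => forall (Y : C), P Y -> forall d : Ext Z Y, d = 0.

End ExtriDefs.

(* Main.v *)
From Pilot Require Import Defs.
From HB Require Import structures.
From mathcomp Require Import all_boot all_algebra.
From Stdlib Require Import Classical.
Import Pilot.Defs.

Set Implicit Arguments.
Unset Strict Implicit.
Unset Printing Implicit Defensive.
Import GRing.Theory.
Local Open Scope ring_scope.

Lemma add_fun0 (V W : zmodType) (F : V -> W) :
  (forall x y, F (x + y) = F x + F y) -> F 0 = 0.
Proof.
move=> H; have h := H 0 0; rewrite addr0 in h.
have : F 0 - F 0 = F 0 + F 0 - F 0 by rewrite -h.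
by rewrite subrr addrK.
Qed.

Lemma add_funN (V W : zmodType) (F : V -> W) :
  (forall x y, F (x + y) = F x + F y) -> forall x, F (- x) = - F x.
Proof.
move=> H x; apply/eqP; rewrite -subr_eq0 opprK -H addNr; apply/eqP.
exact: add_fun0.
Qed.

Lemma add_fun_sum (V W : zmodType) (F : V -> W) (I : finType) (P : pred I) (G : I -> V) :
  (forall x y, F (x + y) = F x + F y) -> F (\sum_(i | P i) G i) = \sum_(i | P i) F (G i).
Proof.
move=> H; apply: (big_morph F H); exact: add_fun0.
Qed.

Section PA.
Variable C : PreAddCat.
Local Notation "g ∘ f" := (comp g f) (at level 40, left associativity).

Lemma comp0m (a b c : C) (f : hom a b) : (0 : hom b c) ∘ f = 0.
Proof. by have /= := @add_fun0 _ _ (fun g : hom b c => g ∘ f) (fun x y => compDl x y f). Qed.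
Lemma compm0 (a b c : C) (g : hom b c) : g ∘ (0 : hom a b) = 0.
Proof. by have /= := @add_fun0 _ _ (fun f : hom a b => g ∘ f) (fun x y => compDr g x y). Qed.
Lemma compNm (a b c : C) (g : hom b c) (f : hom a b) : (- g) ∘ f = - (g ∘ f).
Proof. by have /= := @add_funN _ _ (fun g : hom b c => g ∘ f) (fun x y => compDl x y f). Qed.
Lemma compmN (a b c : C) (g : hom b c) (f : hom a b) : g ∘ (- f) = - (g ∘ f).
Proof. by have /= := @add_funN _ _ (fun f : hom a b => g ∘ f) (fun x y => compDr g x y). Qed.
Lemma compBl (a b c : C) (g g' : hom b c) (f : hom a b) : (g - g') ∘ f = g ∘ f - g' ∘ f.
Proof. by rewrite compDl compNm. Qed.
Lemma compBr (a b c : C) (g : hom b c) (f f' : hom a b) : g ∘ (f - f') = g ∘ f - g ∘ f'.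
Proof. by rewrite compDr compmN. Qed.
Lemma comp_suml (a b c : C) (I : finType) (P : pred I) (G : I -> hom b c) (f : hom a b) :
  (\sum_(i | P i) G i) ∘ f = \sum_(i | P i) (G i ∘ f).
Proof. by have /= := @add_fun_sum _ _ (fun g : hom b c => g ∘ f) _ P G (fun x y => compDl x y f). Qed.
Lemma comp_sumr (a b c : C) (I : finType) (P : pred I) (G : I -> hom a b) (g : hom b c) :
  g ∘ (\sum_(i | P i) G i) = \sum_(i | P i) (g ∘ G i).
Proof. by have /= := @add_fun_sum _ _ (fun f : hom a b => g ∘ f) _ P G (fun x y => compDr g x y). Qed.


Lemma iso_id (a : C) : isIso (idm a).
Proof. by exists (idm a); rewrite comp1m. Qed.

Lemma iso_comp (a b c : C) (f : hom a b) (g : hom b c) :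
  isIso f -> isIso g -> isIso (g ∘ f).
Proof.
move=> [f' [h1 h2]] [g' [h3 h4]]; exists (f' ∘ g'); split.
- by rewrite compA -(compA f') h3 compm1.
- by rewrite compA -(compA g) h2 compm1.
Qed.

Lemma jacobson (a b : C) (x : hom a b) (y : hom b a) :
  isIso (idm a - y ∘ x) -> isIso (idm b - x ∘ y).
Proof.
move=> [w [h1 h2]]; exists (idm b + x ∘ w ∘ y); split.
- rewrite compDl comp1m compDr compm1 compmN.
  have -> : x ∘ w ∘ y ∘ (x ∘ y) = x ∘ w ∘ y - x ∘ y.
    have e : w ∘ (y ∘ x) = w - idm a.
      by rewrite -h1 compBr compm1 opprB addrC subrK.
    transitivity (x ∘ (w ∘ (y ∘ x)) ∘ y); first by rewrite !compA.
    by rewrite e compBr compm1 compBl.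
  by rewrite opprB [X in _ + X]addrC subrK subrK.
- rewrite compDr compm1 compBl comp1m.
  have -> : x ∘ y ∘ (x ∘ w ∘ y) = x ∘ w ∘ y - x ∘ y.
    have e : (y ∘ x) ∘ w = w - idm a.
      by rewrite -h2 compBl comp1m opprB addrC subrK.
    transitivity (x ∘ ((y ∘ x) ∘ w) ∘ y); first by rewrite !compA.
    by rewrite e compBr compm1 compBl.
  by rewrite opprB [X in _ + X]addrC subrK subrK.
Qed.

Definition radm (a b : C) (al : hom a b) : Prop :=
  forall be : hom b a, isIso (idm a - be ∘ al).

Lemma rad0 (a b : C) : radm (0 : hom a b).
Proof. by move=> be; rewrite compm0 subr0; apply: iso_id. Qed.

Lemma rad_comp (a b c : C) (al : hom a b) (g : hom b c) : radm al -> radm (g ∘ al).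
Proof. by move=> h be; rewrite compA; apply: h. Qed.

Lemma rad_add (a b : C) (al al' : hom a b) : radm al -> radm al' -> radm (al + al').
Proof.
move=> h h' be; have [v [hv1 hv2]] := h be.
have -> : idm a - be ∘ (al + al') = (idm a - be ∘ al) ∘ (idm a - (v ∘ be) ∘ al').
  rewrite compBr compm1 -compA compA hv2 comp1m compDr opprD addrA //.
apply: iso_comp; [exact: h' | exists v; split => //].
Qed.

Lemma rad_sum (a b : C) (I : finType) (P : pred I) (F : I -> hom a b) :
  (forall i, P i -> radm (F i)) -> radm (\sum_(i | P i) F i).
Proof.
move=> h; apply: (big_ind (@radm a b)); [exact: rad0| exact: rad_add | exact: h].
Qed.

Lemma local_rad (a b : C) (al : hom a b) :
  local_endo a -> local_endo b -> ~ isIso al -> radm al.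
Proof.
move=> [na la] [nb lb] nal be.
case: (la (be ∘ al)) => // -[t [t1 t2]].
set r := t ∘ be.
have ra : r ∘ al = idm a by rewrite /r -compA.
set e := al ∘ r.
have ee : e ∘ e = e by rewrite /e -compA (compA r) ra comp1m.
case: (lb e) => -[u [u1 u2]].
- have e1 : e = idm b by rewrite -u1 -{2}ee compA u1 comp1m.
  by exfalso; apply: nal; exists r; split.
- have e0 : e = 0.
    have : (idm b - e) ∘ e = 0 by rewrite compBl comp1m ee subrr.
    by move=> h; rewrite -[e]comp1m -u1 -compA h compm0.
  exfalso; apply: na.
  have h0 : r ∘ al = 0.
    by rewrite -{1}(compm1 al) -ra (compA al) -/e e0 comp0m compm0.
  by rewrite -h0 ra.
Qed.

End PA.

Section ET.
Variable C : ExtriCat.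
Local Notation "g ∘ f" := (comp g f) (at level 40, left associativity).

Lemma push0 (A A' D : C) (a : hom A A') : push a (0 : Ext D A) = 0.
Proof. by have /= := @add_fun0 _ _ (push a) (pushD a). Qed.
Lemma pull0 (A D D' : C) (c : hom D' D) : pull c (0 : Ext D A) = 0.
Proof. by have /= := @add_fun0 _ _ (pull c) (pullD c). Qed.
Lemma push0m (A A' D : C) (d : Ext D A) : push (0 : hom A A') d = 0.
Proof. by have /= := @add_fun0 _ _ (fun a : hom A A' => push a d) (fun a a' => pushDm a a' d). Qed.
Lemma pull0m (A D D' : C) (d : Ext D A) : pull (0 : hom D' D) d = 0.
Proof. by have /= := @add_fun0 _ _ (fun c : hom D' D => pull c d) (fun c c' => pullDm c c' d). Qed.
Lemma pullNm (A D D' : C) (c : hom D' D) (d : Ext D A) : pull (- c) d = - pull c d.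
Proof. by have /= := @add_funN _ _ (fun c : hom D' D => pull c d) (fun c c' => pullDm c c' d). Qed.
Lemma pullBm (A D D' : C) (c c' : hom D' D) (d : Ext D A) : pull (c - c') d = pull c d - pull c' d.
Proof. by rewrite pullDm pullNm. Qed.

Lemma zero_split_A (A : C) : exists (Z : C), realizes (0 : Ext Z A) (idm A) (0 : hom A Z).
Proof.
have [Z hZ] := ex_zero_obj C; exists Z; apply: (@real_zero _ A Z A (idm A) 0 (idm A) 0).
split; rewrite ?comp1m ?compm0 ?comp0m ?addr0 //.
Qed.

Lemma zero_split_D (D : C) : exists (Z : C), realizes (0 : Ext D Z) (0 : hom Z D) (idm D).
Proof.
have [Z hZ] := ex_zero_obj C; exists Z; apply: (@real_zero _ Z D D 0 (idm D) 0 (idm D)).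
split; rewrite ?comp1m ?compm0 ?comp0m ?add0r //.
Qed.

Lemma real_comp0 (A B D : C) (d : Ext D A) (x : hom A B) (y : hom B D) :
  realizes d x y -> y ∘ x = 0.
Proof.
move=> r; have [Z hZ] := zero_split_A A.
have [c [h1 _]] := ET3 (a := idm A) (b := x) hZ r erefl.
by rewrite -h1 compm0.
Qed.

Lemma real_push0 (A B D : C) (d : Ext D A) (x : hom A B) (y : hom B D) :
  realizes d x y -> push x d = 0.
Proof.
move=> r; have [Z hZ] := zero_split_A B.
have [c [_ h2]] := ET3 (a := x) (b := idm B) r hZ erefl.
by rewrite h2 pull0.
Qed.

Lemma real_pull0 (A B D : C) (d : Ext D A) (x : hom A B) (y : hom B D) :
  realizes d x y -> pull y d = 0.
Proof.
move=> r; have [Z hZ] := zero_split_D B.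
have [a [_ h2]] := ET3op (b := idm B) (c := y) hZ r erefl.
by rewrite -h2 push0.
Qed.

Lemma exact_hom_cov (A B D W : C) (d : Ext D A) (x : hom A B) (y : hom B D)
  (g : hom A W) : realizes d x y -> push g d = 0 -> exists c : hom B W, g = c ∘ x.
Proof.
move=> r h.
have [S [p1 [p2 [e1 [e2 hb]]]]] := ex_biprod W D.
have rz := real_zero hb.
have [b [hb1 hb2]] := real_morph (a := g) (c := idm D) r rz (etrans h (esym (pull0 W (idm D)))).
exists (p1 ∘ b); case: hb => h11 _ _ _ _.
by rewrite -compA hb1 compA h11 comp1m.
Qed.

Lemma exact_hom_contra (A B D V : C) (d : Ext D A) (x : hom A B) (y : hom B D)
  (g : hom V D) : realizes d x y -> pull g d = 0 -> exists s : hom V B, g = y ∘ s.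
Proof.
move=> r h.
have [S [p1 [p2 [e1 [e2 hb]]]]] := ex_biprod A V.
have rz := real_zero hb.
have [b [hb1 hb2]] := real_morph (a := idm A) (c := g) rz r (etrans (push0 V (idm A)) (esym h)).
exists (b ∘ e2); case: hb => _ h22 _ _ _.
by rewrite compA hb2 -compA h22 compm1.
Qed.

Lemma exact_ext_mid (A B D V : C) (d : Ext D A) (x : hom A B) (y : hom B D)
  (eps : Ext V B) : realizes d x y -> push y eps = 0 ->
  exists eps0 : Ext V A, eps = push x eps0.
Proof.
move=> r h.
have [N [m [n rm]]] := real_ex eps.
have [E [hh [h' [d'' [dd [e [r1 r2 e1 e2 _]]]]]]] := ET4 r rm.
have [s hs] := exact_hom_contra (g := idm V) r2 (etrans (pull1 _) h).
exists (pull s d''); by rewrite push_pull e2 -pull_comp -hs pull1.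
Qed.

Lemma exact_ext_conn (A B D V : C) (d : Ext D A) (x : hom A B) (y : hom B D)
  (eps0 : Ext V A) : realizes d x y -> push x eps0 = 0 ->
  exists g : hom V D, eps0 = pull g d.
Proof.
move=> r h.
have [N [k [l rk]]] := real_ex eps0.
have [c hc] := exact_hom_cov rk h.
have [g [_ hg]] := ET3 (a := idm A) (b := c) rk r (etrans (esym hc) (esym (compm1 _))).
by exists g; rewrite -hg push1.
Qed.

End ET.



Definition upd (n : nat) (T : 'I_n -> Type) (F : forall k, T k) (i : 'I_n) (x : T i) :
  forall k, T k :=
  fun k => match i =P k with
           | ReflectT E => match E in _ = k0 return T k0 with erefl => x end
           | ReflectF _ => F k end.

Lemma upd_eq n (T : 'I_n -> Type) (F : forall k, T k) i (x : T i) : upd F x i = x.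
Proof.
rewrite /upd; case: (i =P i) => // E.
by rewrite (eq_irrelevance E erefl).
Qed.

Lemma upd_neq n (T : 'I_n -> Type) (F : forall k, T k) i (x : T i) k :
  k != i -> upd F x k = F k.
Proof.
rewrite /upd => nk; case: (i =P k) => // E.
by subst i; rewrite eqxx in nk.
Qed.

Lemma sum_collapse (V : zmodType) n (S : {set 'I_n}) (F : 'I_n -> V) k :
  k \in S -> (forall l, l \in S -> l != k -> F l = 0) -> \sum_(l in S) F l = F k.
Proof.
move=> kS h; rewrite (big_setD1 k) //= big1 ?addr0 // => l.
by rewrite in_setD1 => /andP [lk lS]; apply: h.
Qed.

Lemma min_set n (P : {set 'I_n} -> Prop) S0 :
  P S0 -> exists S, P S /\ forall S' : {set 'I_n}, (#|S'| < #|S|)%N -> ~ P S'.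
Proof.
suff H : forall k (S : {set 'I_n}), (#|S| < k)%N -> P S -> exists S, P S /\ forall S' : {set 'I_n}, (#|S'| < #|S|)%N -> ~ P S'.
  by apply: (H (#|S0|.+1)).
elim=> [//|k IH] S hS PS.
case: (classic (exists S' : {set 'I_n}, (#|S'| < #|S|)%N /\ P S')) => [[S' [h1 h2]]|nh].
- apply: (IH S') => //; exact: (leq_trans h1).
- by exists S; split => // S' h1 h2; apply: nh; exists S'.
Qed.

Section Bip.
Variable C : ExtriCat.
Local Notation "g ∘ f" := (comp g f) (at level 40, left associativity).

Definition bip n (Xs : 'I_n -> C) (S : {set 'I_n}) (W : C)
  (p : forall i, hom W (Xs i)) (e : forall i, hom (Xs i) W) : Prop :=
  [/\ forall i, i \in S -> p i ∘ e i = idm (Xs i),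
      forall i j, i \in S -> j \in S -> i != j -> p i ∘ e j = 0 &
      \sum_(i in S) e i ∘ p i = idm W].

Lemma bip_exists (Y : C -> Prop) (hY : additive_sub Y) n (Xs : 'I_n -> C) (S : {set 'I_n}) :
  exists W p e, @bip n Xs S W p e /\ ((forall i, i \in S -> Y (Xs i)) -> Y W).
Proof.
move: {2}#|S| (erefl #|S|) => k; elim: k S => [|k IH] S hk.
- have [Z hZ] := ex_zero_obj C.
  exists Z, (fun i => 0), (fun i => 0); split; last by move=> _; apply: hY.1.
  move/eqP: hk; rewrite cards_eq0 => /eqP ->.
  by split => [i|i j|]; rewrite ?in_set0 // big_set0.
- have [i iS] : exists i, i \in S.
    by apply/set0Pn; rewrite -card_gt0 hk.
  have hk' : #|S :\ i| = k.
    by move: hk; rewrite (cardsD1 i) iS add1n => -[].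
  have [W' [p' [e' [[h1 h2 h3] hYW]]]] := IH _ hk'.
  have [V [q1 [q2 [r1 [r2 hb]]]]] := ex_biprod (Xs i) W'.
  case: (hb) => b1 b2 b3 b4 b5.
  exists V, (upd (fun k => p' k ∘ q2) q1), (upd (fun k => r2 ∘ e' k) r1); split.
  + split.
    * move=> j jS; case: (eqVneq j i) => [->|ji]; first by rewrite !upd_eq.
      rewrite !upd_neq // -compA (compA q2) b2 comp1m h1 //.
      by rewrite in_setD1 ji.
    * move=> j l jS lS jl.
      case: (eqVneq j i) => [ej|ji]; case: (eqVneq l i) => [el|li].
      -- by move: jl; rewrite ej el eqxx.
      -- subst j; rewrite upd_eq upd_neq // compA b3 comp0m //.
      -- subst l; rewrite upd_eq upd_neq // -compA b4 compm0 //.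
      -- rewrite !upd_neq // -compA (compA q2) b2 comp1m h2 //;
         by rewrite in_setD1 ?ji ?li.
    * rewrite (big_setD1 i) //= !upd_eq.
      rewrite (eq_bigr (fun k => r2 ∘ (e' k ∘ p' k) ∘ q2)); last first.
        move=> j; rewrite in_setD1 => /andP [ji _].
        by rewrite !upd_neq // !compA.
      by rewrite -comp_suml -comp_sumr h3 compm1.
  + move=> hall; apply: (hY.2 _ _ _ _ _ _ _ hb); first exact: hall.
    apply: hYW => j; rewrite in_setD1 => /andP [_ ]; exact: hall.
Qed.

End Bip.



Section Mat.
Variable C : ExtriCat.
Local Notation "g ∘ f" := (comp g f) (at level 40, left associativity).

Variables (n : nat) (Xs : 'I_n -> C) (S : {set 'I_n}) (W : C)
  (p : forall i, hom W (Xs i)) (e : forall i, hom (Xs i) W).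
Hypothesis hb : bip S p e.

Definition Rm (rho : hom W W) := forall i j, i \in S -> j \in S -> radm (p i ∘ rho ∘ e j).

Lemma Rm_comp (chi rho : hom W W) : Rm rho -> Rm (chi ∘ rho).
Proof.
move=> h i j iS jS.
have [_ _ h3] := hb.
have -> : p i ∘ (chi ∘ rho) ∘ e j = \sum_(k in S) (p i ∘ chi ∘ e k) ∘ (p k ∘ rho ∘ e j).
  transitivity (p i ∘ chi ∘ idm W ∘ rho ∘ e j); first by rewrite compm1 !compA.
  rewrite -h3 comp_sumr comp_suml comp_suml.
  by apply: eq_bigr => k _; rewrite !compA.
by apply: rad_sum => k kS; apply: rad_comp; apply: h.
Qed.

Lemma Rm_iso_T (T : {set 'I_n}) (rho : hom W W) : T \subset S -> Rm rho ->
  isIso (idm W - \sum_(j in T) rho ∘ e j ∘ p j).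
Proof.
move: {2}#|T| (erefl #|T|) => k; elim: k T rho => [|k IH] T rho hk TS hR.
- move/eqP: hk; rewrite cards_eq0 => /eqP ->.
  by rewrite big_set0 subr0; apply: iso_id.
- have [j jT] : exists j, j \in T.
    by apply/set0Pn; rewrite -card_gt0 hk.
  have hk' : #|T :\ j| = k.
    by move: hk; rewrite (cardsD1 j) jT add1n => -[].
  have jS : j \in S by apply: (subsetP TS).
  have TS' : T :\ j \subset S by apply: (subset_trans _ TS); apply: subD1set.
  have [V [hV1 hV2]] := IH _ rho hk' TS' hR.
  set U := idm W - \sum_(j0 in T :\ j) rho ∘ e j0 ∘ p j0.
  rewrite (big_setD1 j) //=.
  have -> : idm W - (rho ∘ e j ∘ p j + \sum_(j0 in T :\ j) rho ∘ e j0 ∘ p j0)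
            = U - rho ∘ e j ∘ p j.
    by rewrite /U opprD [- (rho ∘ e j ∘ p j) + _]addrC addrA.
  have -> : U - rho ∘ e j ∘ p j = U ∘ (idm W - (V ∘ rho ∘ e j) ∘ p j).
    by rewrite compBr compm1 !compA hV2 comp1m.
  apply: iso_comp; last by exists V; split; [exact: hV1 | exact: hV2].
  apply: jacobson.
  have := Rm_comp V hR jS jS (idm _); rewrite comp1m.
  by rewrite !compA.
Qed.

Lemma Rm_iso (rho : hom W W) : Rm rho -> isIso (idm W - rho).
Proof.
move=> hR; have := Rm_iso_T (subxx S) hR.
case: hb => _ _ h3.
suff -> : \sum_(j in S) rho ∘ e j ∘ p j = rho by [].
by rewrite -{2}[rho]compm1 -h3 comp_sumr; apply: eq_bigr => j _; rewrite compA.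
Qed.

End Mat.



Section Ret.
Variable C : ExtriCat.
Local Notation "g ∘ f" := (comp g f) (at level 40, left associativity).

Lemma bip_collapse_l n (Xs : 'I_n -> C) S W (p : forall i, hom W (Xs i)) e (Z : C)
  (G : forall l, hom Z (Xs l)) k :
  bip S p e -> k \in S -> p k ∘ (\sum_(l in S) e l ∘ G l) = G k.
Proof.
move=> [h1 h2 _] kS; rewrite comp_sumr (sum_collapse kS).
  by rewrite compA h1 // comp1m.
by move=> l lS lk; rewrite compA h2 // ?comp0m // eq_sym.
Qed.

Lemma bip_collapse_r n (Xs : 'I_n -> C) S W (p : forall i, hom W (Xs i)) e (Z : C)
  (G : forall l, hom (Xs l) Z) k :
  bip S p e -> k \in S -> (\sum_(l in S) G l ∘ p l) ∘ e k = G k.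
Proof.
move=> [h1 h2 _] kS; rewrite comp_suml (sum_collapse kS).
  by rewrite -compA h1 // compm1.
by move=> l lS lk; rewrite -compA h2 // ?compm0.
Qed.

Lemma biprodn_bip n (Xs : 'I_n -> C) X (p : forall i, hom X (Xs i)) e :
  biprodn p e -> bip [set: 'I_n] p e.
Proof.
move=> [h1 h2 h3]; split => [i _|i j _ _|]; [exact: h1 | exact: h2 |].
by rewrite -h3; apply: eq_bigl => i; rewrite in_setT.
Qed.

Lemma retract_Y (Y : C -> Prop) (hYadd : additive_sub Y) (hYsum : summand_closed Y)
  n (Xs : 'I_n -> C) X (p : forall i, hom X (Xs i)) e :
  biprodn p e -> Y X -> forall i, Y (Xs i).
Proof.
move=> hb YX i.
have hB := biprodn_bip hb.
have [W' [p' [e' [hb' _]]]] := bip_exists hYadd Xs ([set: 'I_n] :\ i).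
set P2 := \sum_(k in [set: 'I_n] :\ i) e' k ∘ p k.
set E2 := \sum_(k in [set: 'I_n] :\ i) e k ∘ p' k.
suff h : biprod2 (p i) P2 (e i) E2 by case: (hYsum _ _ _ _ _ _ _ h YX).
have iS : forall k, k \in [set: 'I_n] :\ i -> k \in [set: 'I_n] by move=> k; rewrite in_setT.
have pE2 : forall k, k \in [set: 'I_n] :\ i -> p k ∘ E2 = p' k.
  move=> k kS; rewrite /E2.
  rewrite comp_sumr (sum_collapse kS).
    by case: hb => h1 _ _; rewrite compA h1 comp1m.
  by move=> l lS lk; case: hb => _ h2 _; rewrite compA h2 ?comp0m // eq_sym.
have pP2 : forall k, k \in [set: 'I_n] :\ i -> p' k ∘ P2 = p k.
  move=> k kS; exact: (bip_collapse_l _ hb' kS).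
split.
- by case: hb.
- case: (hb') => _ _ h3'; rewrite /P2 comp_suml -[RHS]h3'; apply: eq_bigr => k kS.
  by rewrite -compA pE2.
- rewrite /E2 comp_sumr big1 // => k; rewrite in_setD1 => /andP [ki _].
  by case: hb => _ h2 _; rewrite compA h2 ?comp0m // eq_sym.
- rewrite /P2 comp_suml big1 // => k; rewrite in_setD1 => /andP [ki _].
  by case: hb => _ h2 _; rewrite -compA h2 ?compm0.
- rewrite /E2 comp_suml.
  rewrite (eq_bigr (fun k => e k ∘ p k)); last by move=> k kS; rewrite -compA pP2.
  case: hb => _ _ h3; rewrite -h3 [RHS](bigD1 i) //=; congr (_ + _).
  by apply: eq_bigl => k; rewrite in_setD1 in_setT andbT.
Qed.

End Ret.



Lemma zid (V : zmodType) (x y z w : V) : (- x - y) + z + w = (z - y) + (w - x).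
Proof. by rewrite -addrA addrC [RHS]addrACA; congr (_ + _); exact: addrC. Qed.

Section App.
Variable C : ExtriCat.
Local Notation "g ∘ f" := (comp g f) (at level 40, left associativity).
Variable Y : C -> Prop.
Variables (D I : C) (b : hom I D).
Variables (n : nat) (Xs : 'I_n -> C) (fs : forall i, hom (Xs i) D).

Definition AppB (S : {set 'I_n}) := forall Y' : C, Y Y' -> forall g : hom Y' D,
  exists (hs : forall i, hom Y' (Xs i)) (s : hom Y' I),
    g = \sum_(i in S) fs i ∘ hs i + b ∘ s.

Section W.
Variables (S : {set 'I_n}) (W : C) (p : forall i, hom W (Xs i)) (e : forall i, hom (Xs i) W).
Hypothesis hb : bip S p e.
Let fW := \sum_(k in S) fs k ∘ p k.

Lemma drop_lemma (phi : hom W W) (s : hom W I) i j :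
  AppB S -> fW ∘ phi = fW + b ∘ s -> i \in S -> j \in S ->
  isIso (p i ∘ (idm W - phi) ∘ e j) -> AppB (S :\ i).
Proof.
move=> hA hphi iS jS [t [t1 t2]].
set psi := idm W - phi.
have hpsi : fW ∘ psi = - (b ∘ s) by rewrite /psi compBr compm1 hphi opprD addrA subrr add0r.
have col : \sum_(k in S) fs k ∘ (p k ∘ psi ∘ e j) = - (b ∘ s ∘ e j).
  rewrite -compNm -hpsi /fW comp_suml comp_suml.
  by apply: eq_bigr => k _; rewrite !compA.
have key : fs i ∘ (p i ∘ psi ∘ e j) =
    - (b ∘ s ∘ e j) - \sum_(k in S :\ i) fs k ∘ (p k ∘ psi ∘ e j).
  by rewrite -col (big_setD1 i) //= addrK.
move=> Y' hY' g; have [hs [s' hg]] := hA Y' hY' g.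
exists (fun k => hs k - (p k ∘ psi ∘ e j) ∘ t ∘ hs i), (s' - s ∘ e j ∘ t ∘ hs i).
rewrite hg (big_setD1 i) //=.
have -> : fs i ∘ hs i = fs i ∘ (p i ∘ psi ∘ e j) ∘ (t ∘ hs i).
  by rewrite -compA (compA _ t) t2 comp1m.
rewrite key compBl compNm comp_suml.
rewrite [in RHS](eq_bigr (fun k => fs k ∘ hs k - fs k ∘ (p k ∘ psi ∘ e j ∘ t ∘ hs i))); last first.
  by move=> k _; rewrite compBr.
rewrite sumrB compBr.
have -> : \sum_(k in S :\ i) fs k ∘ (p k ∘ psi ∘ e j) ∘ (t ∘ hs i)
        = \sum_(k in S :\ i) fs k ∘ (p k ∘ psi ∘ e j ∘ t ∘ hs i).
  by apply: eq_bigr => k _; rewrite !compA.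
have -> : b ∘ s ∘ e j ∘ (t ∘ hs i) = b ∘ (s ∘ e j ∘ t ∘ hs i) by rewrite !compA.
by rewrite zid.
Qed.

Lemma W_app : AppB S -> forall Y' : C, Y Y' -> forall g : hom Y' D,
  exists (h : hom Y' W) (s : hom Y' I), g = fW ∘ h + b ∘ s.
Proof.
move=> hA Y' hY' g; have [hs [s hg]] := hA Y' hY' g.
exists (\sum_(k in S) e k ∘ hs k), s; rewrite hg; congr (_ + _).
rewrite /fW comp_suml; apply: eq_bigr => l lS.
by rewrite -compA (bip_collapse_l _ hb lS).
Qed.

Lemma min_iso : (forall i, i \in S -> local_endo (Xs i)) -> AppB S ->
  (forall S' : {set 'I_n}, (#|S'| < #|S|)%N -> ~ AppB S') ->
  forall (phi : hom W W) (s : hom W I), fW ∘ phi = fW + b ∘ s -> isIso phi.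
Proof.
move=> hloc hA hmin phi s hphi.
rewrite -[phi](subKr (idm W)).
apply: (Rm_iso hb) => i j iS jS.
apply: local_rad; [exact: hloc | exact: hloc |] => hiso.
apply: (hmin (S :\ i)); last exact: (drop_lemma hA hphi iS jS hiso).
by rewrite (cardsD1 i S) iS add1n ltnSn.
Qed.

End W.
End App.



Theorem lemma3p2 (C : ExtriCat)
    (hKS : krull_schmidt C)
    (hproj : enough_projectives C) (hinj : enough_injectives C)
    (Y : C -> Prop)
    (hYiso : iso_closed Y) (hYadd : additive_sub Y)
    (hYcf : contravariantly_finite Y)
    (hYext : ext_closed Y) (hYsum : summand_closed Y) :
  covariantly_finite (perp1_right Y) /\
  ext_closed (perp1_right Y) /\
  summand_closed (perp1_right Y).
Proof.
split; last split.
- move=> X.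
  have [I [D [delta [a [b [rd hI]]]]]] := hinj X.
  have [Y0 [f [hY0 happ]]] := hYcf D.
  have [n [Xs [p [e [hbn hloc]]]]] := hKS Y0.
  pose fs := fun i => comp f (e i).
  have AppT : AppB Y b fs [set: 'I_n].
    move=> Y' hY' g; have [h hg] := happ Y' g hY'.
    exists (fun i => comp (p i) h), 0; rewrite compm0 addr0 hg.
    transitivity (\sum_(i < n) comp (fs i) (comp (p i) h)); last first.
      by apply: eq_bigl => i; rewrite in_setT.
    case: hbn => _ _ h3.
    rewrite -{1}(compm1 f) -h3 comp_sumr comp_suml.
    by apply: eq_bigr => i _; rewrite /fs !compA.
  have [S [hS hmin]] := min_set AppT.
  have [W [pW [eW [hbW hYW]]]] := bip_exists hYadd Xs S.
  have YW : Y W.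
    by apply: hYW => i _; apply: (retract_Y hYadd hYsum hbn hY0).
  set fW := \sum_(k in S) comp (fs k) (pW k).
  have appW := W_app hbW hS.
  have isoW := min_iso hbW (fun i _ => hloc i) hS hmin.
  set d := pull fW delta.
  have [M [x [q rdq]]] := real_ex d.
  exists M, x; split; last first.
    move=> X' g hX'; apply: (exact_hom_cov rdq); exact: hX' W YW _.
  move=> Y' hY' eps.
  have [N [m [nn rm]]] := real_ex eps.
  have [E [hh [h' [th [u [ee [r1 r2 e1 e2 _]]]]]]] := ET4 rdq rm.
  have YE : Y E := hYext _ _ _ _ _ _ r2 YW hY'.
  have [c hc] := exact_hom_cov (g := a) r1 (hI _ _).
  have [g [_ hg]] := ET3 (a := idm X) (b := c) r1 rd (etrans (esym hc) (esym (compm1 a))).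
  rewrite push1 in hg.
  have [k [s1 hk]] := appW E YE g.
  have hphi : pull (comp fW (comp k u) - fW) delta = 0.
    rewrite pullBm; apply/eqP; rewrite subr_eq0; apply/eqP.
    rewrite -/d -e1 hg hk pullDm [pull (comp b s1) _]pull_comp (real_pull0 rd) pull0 addr0.
    by rewrite !pull_comp.
  have [s hs] := exact_hom_contra rd hphi.
  have [w [w1 w2]] : isIso (comp k u).
    by apply: (isoW _ s); rewrite -hs addrC subrK.
  have pq0 : push q eps = 0.
    by rewrite -[push q eps]push1 -w1 compA push_comp (real_push0 r2) push0.
  have [e0 he0] := exact_ext_mid rdq pq0.
  have [g0 hg0] := exact_ext_conn rd (hI _ (push a e0)).
  have [k0 [s0 hk0]] := appW Y' hY' g0.
  rewrite he0 hg0 hk0 pullDm !pull_comp (real_pull0 rd) pull0 addr0.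
  by rewrite push_pull (real_push0 rdq) pull0.
- move=> A B D d x y r hA hD Y' hY' eps.
  have h0 : push y eps = 0 := hD Y' hY' _.
  have [e0 ->] := exact_ext_mid r h0.
  by rewrite (hA Y' hY' e0) push0.
- move=> A1 A2 S p1 p2 e1 e2 [b1 b2 b3 b4 b5] hS; split => Y' hY' eps.
  + by rewrite -[eps]push1 -b1 push_comp (hS Y' hY' (push e1 eps)) push0.
  + by rewrite -[eps]push1 -b2 push_comp (hS Y' hY' (push e2 eps)) push0.
Qed.
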